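(* Let $(X,* )$ be a commutative hypergroup and let $(T_k)_{k\ge1}$ be a sequence of hypergroup automorphisms of $X$ which converges pointwise to a continuous map $T:X\to X$ such that $T(X)$ is closed in $X$. Then $T(X)$ is a subhypergroup of $X$ and $T(\delta_x*\delta_{\bar y})=\delta_{T(x)}*\delta_{\overline{T(y)}}$ for all $x,y\in X$, i.e. $T$ is a hypergroup homomorphism from $X$ onto $T(X)$.
   Context: A hypergroup $(X,* )$ is a locally compact Hausdorff space $X$ with a bilinear, associative, weakly continuous, probability preserving convolution $*$ on the bounded regular Borel measures $M_b(X)$ with $\mathrm{supp}(\delta_x*\delta_y)$ compact, an identity $e$ and a continuous involution $x\mapsto\bar x$ with $e\in\mathrm{supp}(\delta_x*\delta_y)\iff x=\bar y$ and $\delta_{\bar x}*\delta_{\bar y}=(\delta_y*\delta_x)^-$. A closed set $H\subset X$ is a subhypergroup if $\bar x\in H$ and $\mathrm{supp}(\delta_x*\delta_y)\subset H$ for all $x,y\in H$. A continuous map $T:X\to Y$ between hypergroups is a hypergroup homomorphism if $T(\delta_x*\delta_{\bar y})=\delta_{T(x)}*\delta_{\overline{T(y)}}$ for all $x,y$, where $T$ acts on measures by taking image measures; an automorphism is a homomorphism $X\to X$ which is a homeomorphism with homomorphic inverse. *)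

(* Defs.v *)
From HB Require Import structures.
From mathcomp Require Import all_boot all_order all_algebra.
From mathcomp Require Import all_classical all_reals all_analysis.
Set Implicit Arguments. Unset Strict Implicit. Unset Printing Implicit Defensive.
Import Order.TTheory GRing.Theory Num.Theory.
Import numFieldNormedType.Exports.
Local Open Scope classical_set_scope.
Local Open Scope ring_scope.

Notation borelT X := (g_sigma_algebraType (@open X)).

Section Hypergroup.
Variables (R : realType) (X : ptopologicalType).

(* a point-mass convolution kernel: conv x y = delta_x * delta_y,
   a probability measure on the Borel sets of X *)
Local Notation kernel := (X -> X -> probability (borelT X) R).

Definition msupp (mu : set (borelT X) -> \bar R) : set X :=
  [set z | forall U : set X, open U -> U z -> (0 < mu U)%E].

Definition regular_measure (mu : set (borelT X) -> \bar R) : Prop :=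
  forall A : set (borelT X), measurable A ->
  forall eps : R, 0 < eps ->
    (exists U : set X, [/\ open U, A `<=` U & (mu U <= mu A + eps%:E)%E]) /\
    (exists K : set X, [/\ compact K, K `<=` A & (mu A <= mu K + eps%:E)%E]).

Definition bounded_continuous (f : X -> R) : Prop :=
  continuous f /\ exists M : R, forall x, `|f x| <= M.

(* The convolution on M_b(X) is the
   unique bilinear weakly continuous extension of the point-mass convolution
   (mu * nu)(f) = \int \int (delta_x * delta_y)(f) dmu(x) dnu(y); we state the
   axioms on point masses. *)
Record hypergroup (conv : kernel) (e : X) (inv : X -> X) : Prop := {
  hg_hausdorff : hausdorff_space X;
  hg_locally_compact : locally_compact [set: X];
  hg_regular : forall x y, regular_measure (conv x y);
  hg_weak_cont : forall f : X -> R, bounded_continuous f ->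
      continuous (fun p : X * X => Rintegral (conv p.1 p.2) setT f);
  hg_assoc : forall x y z (f : X -> R), bounded_continuous f ->
      Rintegral (conv x y) setT (fun u => Rintegral (conv u z) setT f) =
      Rintegral (conv y z) setT (fun v => Rintegral (conv x v) setT f);
  hg_supp_compact : forall x y, compact (msupp (conv x y));
  hg_unit_l : forall x (A : set (borelT X)), measurable A -> conv e x A = \d_(x : borelT X) A;
  hg_unit_r : forall x (A : set (borelT X)), measurable A -> conv x e A = \d_(x : borelT X) A;
  hg_inv_cont : continuous inv;
  hg_inv_invol : forall x, inv (inv x) = x;
  hg_supp_e : forall x y, msupp (conv x y) e <-> x = inv y;
  hg_inv_conv : forall x y (A : set (borelT X)), measurable A ->
      conv (inv x) (inv y) A = conv y x (inv @^-1` A)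
}.

Definition commutative_hypergroup (conv : kernel) (e : X) (inv : X -> X) : Prop :=
  hypergroup conv e inv /\ forall x y, conv x y = conv y x.

Definition subhypergroup (conv : kernel) (inv : X -> X) (H : set X) : Prop :=
  [/\ closed H, forall x, H x -> H (inv x)
    & forall x y, H x -> H y -> msupp (conv x y) `<=` H].

(* T(delta_x * delta_{inv y}) = delta_{T x} * delta_{inv (T y)}, T acting on
   measures by image measures *)
Definition hg_hom_eq (conv : kernel) (inv : X -> X) (T : X -> X) : Prop :=
  forall x y (A : set (borelT X)), measurable A ->
    conv x (inv y) (T @^-1` A) = conv (T x) (inv (T y)) A.

Definition hg_homomorphism (conv : kernel) (inv : X -> X) (T : X -> X) : Prop :=
  continuous T /\ hg_hom_eq conv inv T.

Definition hg_automorphism (conv : kernel) (inv : X -> X) (T : X -> X) : Prop :=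
  exists S : X -> X, [/\ cancel T S, cancel S T,
    hg_homomorphism conv inv T & hg_homomorphism conv inv S].

End Hypergroup.

(* Main.v *)
Require Import Defs.
From HB Require Import structures.
From mathcomp Require Import all_boot all_order all_algebra.
From mathcomp Require Import all_classical all_reals all_analysis.
From mathcomp Require Import measurable_realfun.
Set Implicit Arguments. Unset Strict Implicit. Unset Printing Implicit Defensive.
Import Order.TTheory GRing.Theory Num.Theory.
Import numFieldNormedType.Exports.
Local Open Scope classical_set_scope.
Local Open Scope ring_scope.


Section Basic.
Context (R : realType) (X : ptopologicalType).

Lemma open_mbl (U : set X) : open U -> measurable (U : set (borelT X)).
Proof. by move=> oU; apply: sub_sigma_algebra. Qed.

Lemma closed_mbl (C : set X) : closed C -> measurable (C : set (borelT X)).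
Proof.
move=> cC; rewrite -(setCK C); apply: measurableC; apply: open_mbl.
exact: closed_openC.
Qed.

Lemma cont_mfun_R (f : X -> R) : continuous f -> measurable_fun (setT : set (borelT X)) f.
Proof.
move=> /continuousP cf; apply: (measurability _ (RGenOpens.measurableE R)).
move=> _ [_ [a [b ->] <-]]; rewrite setTI; apply: open_mbl.
exact/cf/interval_open.
Qed.

Lemma cont_mfun_X (T : X -> X) : continuous T -> measurable_fun (setT : set (borelT X)) (T : borelT X -> borelT X).
Proof.
move=> /continuousP cf; apply: (@measurability _ _ (borelT X) (borelT X) setT T (@open X) erefl).
move=> _ [B oB <-]; rewrite setTI; apply: open_mbl; exact: cf.
Qed.

End Basic.


Section Dirac.
Context (R : realType) (X : ptopologicalType).
Hypothesis hsdf : hausdorff_space X.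

Lemma set1_closed (x : X) : closed [set x].
Proof. exact: accessible_closed_set1 (hausdorff_accessible hsdf) x. Qed.

Lemma msupp_dirac (m : set (borelT X) -> \bar R) (y : X) :
  (forall A : set (borelT X), measurable A -> m A = \d_(y : borelT X) A) ->
  forall z, msupp m z <-> z = y.
Proof.
move=> hm z; split.
  move=> hz; apply/eqP/negPn/negP => zy.
  have oU : open (~` [set y]) by apply: closed_openC; exact: set1_closed.
  have := hz _ oU; rewrite hm; last exact: open_mbl.
  rewrite diracE; have -> : (y \in ~` [set y]) = false.
    by apply/negP; rewrite inE /=; apply.
  rewrite ltxx => H; have: [set~ y] z by move=> /= zy'; move/eqP: zy; apply.
  by move/H.
move=> -> U oU Uy; rewrite hm; last exact: open_mbl.
by rewrite diracE mem_set // lte01.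
Qed.

Lemma dirac_inj (a b : X) :
  (forall A : set (borelT X), measurable A ->
     \d_(a : borelT X) A = \d_(b : borelT X) A :> \bar R) -> a = b.
Proof.
move=> h; have := h [set b] (closed_mbl (@set1_closed b)).
rewrite !diracE; have -> : b \in [set b] by rewrite inE.
case: (boolP (a \in [set b])); first by rewrite inE.
by move=> _ /eqP; rewrite eqe (@eqr_nat R 0 1).
Qed.

End Dirac.


Section Ury.
Context (R : realType) (X : ptopologicalType).
Hypothesis hsdf : hausdorff_space X.
Hypothesis lc : locally_compact [set: X].

Lemma urysohn_cpt (K U : set X) : compact K -> open U -> K `<=` U ->
  exists f : X -> R, [/\ continuous f, forall x, 0 <= f x <= 1,
    forall x, K x -> f x = 1 & forall x, ~ U x -> f x = 0].
Proof.
move=> cK oU KU.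
pose Y := one_point_compactification X.
have hY : hausdorff_space Y := one_point_compactification_hausdorff lc hsdf.
have nY : normal_space Y.
  apply: compact_normal => //; exact: one_point_compactification_compact.
have cA : compact (Some @` K : set Y).
  apply: continuous_compact => //; apply: continuous_subspaceT.
  exact: one_point_compactification_some_continuous.
have clA : closed (Some @` K : set Y) by exact: compact_closed.
have clB : closed (~` (Some @` U) : set Y).
  apply: open_closedC; exact: one_point_compactification_open_some.
have AB : (Some @` K : set Y) `&` ~` (Some @` U) = set0.
  apply/seteqP; split => // _ [[k Kk <-]] /=; apply; exists k => //; exact: KU.
have := (@normal_separatorP R Y).1 nY _ _ clA clB AB.
move=> /(uniform_separatorP (R := R)) [g [cg g01 gA gB]].
exists ((cst 1) - (g \o Some)); split.
- move=> x; apply: continuousB; first exact: cst_continuous.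
  apply: continuous_comp; last exact: cg.
  exact: one_point_compactification_some_continuous.
- move=> x; rewrite /cst /= !fctE /=; have := g01 (g (Some x)) (ex_intro2 _ _ (Some x) I erefl).
  rewrite /= in_itv /= => /andP [h0 h1]; rewrite subr_ge0 h1 /=.
  by rewrite lerBlDr lerDl.
- move=> x Kx; rewrite /cst /= !fctE /=; have -> : g (Some x) = 0 by apply: gA; exists (Some x) => //; exists x.
  by rewrite subr0.
- move=> x Ux; rewrite /cst /= !fctE /=; have -> : g (Some x) = 1.
    apply: gB; exists (Some x) => //= -[y Uy [yx]]; apply: Ux; rewrite -yx.
    exact: Uy.
  by rewrite subrr.
Qed.

End Ury.


Section Integ.
Context (R : realType) (X : ptopologicalType).

Lemma bc_comp (f : X -> R) (S : X -> X) : bounded_continuous f -> continuous S ->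
  bounded_continuous (f \o S).
Proof.
move=> [cf [M hM]] cS; split; last by exists M => x; exact: hM.
move=> x; apply: continuous_comp; [exact: cS | exact: cf].
Qed.

Lemma bc_integrable (mu : probability (borelT X) R) (f : X -> R) :
  bounded_continuous f -> mu.-integrable setT (EFin \o f).
Proof.
move=> [cf [M hM]]; apply: measurable_bounded_integrable => //.
- by apply: (le_lt_trans (probability_le1 mu measurableT)); exact: ltry.
- exact: cont_mfun_R.
- rewrite /bounded_near; near=> M0; rewrite /globally /= => t _; apply: le_trans (hM t) _.
  by near: M0; apply: nbhs_pinfty_ge; exact: num_real.
Unshelve. all: end_near. Qed.

Lemma change_var (mu rho : probability (borelT X) R) (S : X -> X) (f : X -> R) :
  continuous S ->
  (forall A : set (borelT X), measurable A -> mu (S @^-1` A) = rho A) ->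
  bounded_continuous f ->
  (\int[mu]_x (f (S x))%:E = \int[rho]_x (f x)%:E)%E.
Proof.
move=> cS h bf.
have mS := cont_mfun_X cS.
have mf : measurable_fun (setT : set (borelT X)) (EFin \o f).
  by apply/measurable_EFinP; apply: cont_mfun_R; case: bf.
have intf : mu.-integrable (S @^-1` setT) ((EFin \o f) \o S).
  by rewrite preimage_setT; apply: (bc_integrable mu (bc_comp bf cS)).
have E := @integral_pushforward _ _ (borelT X) (borelT X) R S mS mu setT (EFin \o f) mf intf measurableT.
rewrite preimage_setT in E; rewrite [LHS](_ : _ = \int[mu]_x ((EFin \o f) \o S) x)%E //.
rewrite -E; apply: eq_measure_integral => A mA _; exact: h.
Qed.

End Integ.


Section Lim.
Context (R : realType) (X : ptopologicalType)
  (conv : X -> X -> probability (borelT X) R) (e : X) (inv : X -> X)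
  (Tk : nat -> X -> X) (T : X -> X).
Hypothesis H : hypergroup conv e inv.
Hypothesis hTk : forall k, hg_homomorphism conv inv (Tk k).
Hypothesis hcvg : forall x, Tk k x @[k --> \oo] --> T x.
Hypothesis cT : continuous T.

Lemma int_fin (mu : probability (borelT X) R) (f : X -> R) :
  bounded_continuous f ->
  (\int[mu]_z (f z)%:E)%E = (Rintegral mu setT f)%:E.
Proof.
move=> bf; rewrite /Rintegral fineK //; apply: integrable_fin_num => //.
exact: (bc_integrable mu bf).
Qed.

Lemma hom_integral (f : X -> R) x y : bounded_continuous f ->
  (\int[conv x (inv y)]_z (f (T z))%:E = \int[conv (T x) (inv (T y))]_z (f z)%:E)%E.
Proof.
move=> bf; have [cf [M hM]] := bf.
set mu := conv x (inv y).
pose a k := (\int[mu]_z (f (Tk k z))%:E)%E.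
have m1 : forall k, measurable_fun (setT : set (borelT X)) (fun z : borelT X => (f (Tk k z))%:E).
  move=> k; apply/measurable_EFinP; apply: cont_mfun_R.
  by case: (bc_comp bf (proj1 (hTk k))).
have m2 : measurable_fun (setT : set (borelT X)) (fun z : borelT X => (f (T z))%:E).
  apply/measurable_EFinP; apply: cont_mfun_R.
  by case: (bc_comp bf cT).
have m3 : {ae mu, forall z : borelT X, setT z -> (fun k => (f (Tk k z))%:E) @ \oo --> (f (T z))%:E}.
  apply: aeW => z _; apply/fine_cvgP; split; first by near=> k.
  have := @continuous_cvg _ _ _ _ _ _ _ _ (cf (T z)) (@hcvg z).
  by apply; exact: _.
have m4 : mu.-integrable (setT : set (borelT X)) (cst M%:E).
  exact: finite_measure_integrable_cst.
have m5 : {ae mu, forall (z : borelT X) k, setT z -> (`|(f (Tk k z))%:E| <= cst M%:E z)%E}.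
  by apply: aeW => z k _ /=; rewrite lee_fin.
have [_ _ h1] := @dominated_convergence _ _ R mu setT measurableT
    (fun k z => (f (Tk k z))%:E) (fun z => (f (T z))%:E) (cst M%:E) m1 m2 m3 m4 m5.
have h2 : (fun k => (Rintegral (conv (Tk k x) (inv (Tk k y))) setT f)%:E) @ \oo -->
    (Rintegral (conv (T x) (inv (T y))) setT f)%:E.
  apply/fine_cvgP; split; first by near=> k.
  apply: (@continuous2_cvg _ _ _ _ _ _ _ _ (fun a b => Rintegral (conv a b) setT f)).
  - have hw := hg_weak_cont H bf; exact: (hw (T x, inv (T y))).
  - exact: (@hcvg x).
  - exact: (@continuous_cvg _ _ _ _ _ _ _ _ (@hg_inv_cont _ _ _ _ _ H (T y)) (@hcvg y)).
have E : (fun k => (\int[mu]_z (f (Tk k z))%:E)%E) =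
    (fun k => (Rintegral (conv (Tk k x) (inv (Tk k y))) setT f)%:E).
  apply/funext => k; rewrite -int_fin //; apply: change_var => //.
  - exact: (proj1 (hTk k)).
  - move=> A mA; exact: (proj2 (hTk k) x y A mA).
rewrite /= E in h1; rewrite [RHS]int_fin //.
exact: (cvg_unique (@ereal_hausdorff R) h1 h2).
Unshelve. all: end_near. Qed.

End Lim.


Section Cmp.
Context (R : realType) (X : ptopologicalType)
  (conv : X -> X -> probability (borelT X) R) (e : X) (inv : X -> X)
  (Tk : nat -> X -> X) (T : X -> X).
Hypothesis H : hypergroup conv e inv.
Hypothesis hTk : forall k, hg_homomorphism conv inv (Tk k).
Hypothesis hcvg : forall x, Tk k x @[k --> \oo] --> T x.
Hypothesis cT : continuous T.

Let hsdf := hg_hausdorff H.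
Let lc := hg_locally_compact H.

Lemma preT_mbl (A : set (borelT X)) : measurable A -> measurable (T @^-1` A : set (borelT X)).
Proof. by move=> mA; rewrite -(setTI (T @^-1` A)); exact: (cont_mfun_X cT measurableT mA). Qed.

Lemma cpt_mbl (K : set X) : compact K -> measurable (K : set (borelT X)).
Proof. by move=> cK; apply: closed_mbl; exact: compact_closed. Qed.

Lemma push_le x y (A : set (borelT X)) : measurable A ->
  (conv x (inv y) (T @^-1` A) <= conv (T x) (inv (T y)) A)%E.
Proof.
move=> mA; set mu := conv x (inv y); set rho := conv (T x) (inv (T y)).
have mTA := preT_mbl mA.
apply/lee_addgt0Pr => eps eps0.
have e0 : 0 < eps / 2 by rewrite divr_gt0.
have [_ [K [cK KA hK]]] := hg_regular H x (inv y) mTA e0.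
have cL : compact (T @` K).
  apply: continuous_compact => //; apply: continuous_subspaceT => z; exact: cT.
have LA : T @` K `<=` A by move=> _ [z Kz <-]; exact: KA.
have mL := cpt_mbl cL; have mK := cpt_mbl cK.
have [[U [oU LU hU]] _] := hg_regular H (T x) (inv (T y)) mL e0.
have [g [cg g01 g1 g0]] := @urysohn_cpt R X hsdf lc _ _ cL oU LU.
have bg : bounded_continuous g.
  split => //; exists 1 => z; have /andP[a b] := g01 z.
  by rewrite ger0_norm.
have mg : measurable_fun (setT : set (borelT X)) (fun z => (g z)%:E).
  by apply/measurable_EFinP; exact: cont_mfun_R.
have mgT : measurable_fun (setT : set (borelT X)) (fun z => (g (T z))%:E).
  by apply/measurable_EFinP; apply: cont_mfun_R; case: (bc_comp bg cT).
have I1 : (mu K <= \int[mu]_z (g (T z))%:E)%E.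
  have -> : mu K = mu (K `&` setT) by rewrite setIT.
  rewrite -integral_indic //.
  apply: ge0_le_integral => //.
  - by apply/measurable_EFinP; apply: measurable_indic.
  - move=> z _; rewrite /indic; case: (boolP (z \in K)) => [/set_mem Kz|_].
      by rewrite g1 //; exists z.
    by rewrite lee_fin; have /andP[] := g01 (T z).
have I2 : (\int[rho]_z (g z)%:E <= rho U)%E.
  have -> : rho U = rho (U `&` setT) by rewrite setIT.
  rewrite -integral_indic //; last exact: open_mbl.
  apply: ge0_le_integral => //.
  - by move=> z _; rewrite lee_fin; have /andP[] := g01 z.
  - by apply/measurable_EFinP; apply: measurable_indic; exact: open_mbl.
  - move=> z _; rewrite /indic; case: (boolP (z \in U)) => [_|/negP Uz].
      by rewrite lee_fin; have /andP[] := g01 z.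
    by rewrite g0 // => Uz'; apply: Uz; exact: mem_set.
have I3 := hom_integral H hTk hcvg cT x y bg.
have I4 : (rho (T @` K) <= rho A)%E by apply: le_measure => //; rewrite inE.
apply: (le_trans hK); apply: (le_trans (leeD2r _ I1)); rewrite I3.
apply: (le_trans (leeD2r _ I2)); apply: (le_trans (leeD2r _ hU)).
rewrite -addeA -EFinD -splitr; exact: leeD2r.
Qed.

End Cmp.


Section Fin.
Context (R : realType) (X : ptopologicalType)
  (conv : X -> X -> probability (borelT X) R) (e : X) (inv : X -> X)
  (Tk : nat -> X -> X) (T : X -> X).
Hypothesis H : hypergroup conv e inv.
Hypothesis hTk : forall k, hg_homomorphism conv inv (Tk k).
Hypothesis hcvg : forall x, Tk k x @[k --> \oo] --> T x.
Hypothesis cT : continuous T.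

Let hsdf := hg_hausdorff H.

Lemma hom_eq_T : hg_hom_eq conv inv T.
Proof.
move=> x y A mA; apply/eqP; rewrite eq_le (push_le H hTk hcvg cT x y mA) /=.
have mC : measurable (~` A) by exact: measurableC.
have h := push_le H hTk hcvg cT x y mC.
have mTA := preT_mbl cT mA.
rewrite preimage_setC probability_setC // probability_setC // in h.
have fa : conv x (inv y) (T @^-1` A) \is a fin_num by exact: fin_num_measure.
have fb : conv (T x) (inv (T y)) A \is a fin_num by exact: fin_num_measure.
move: h; rewrite -(fineK fa) -(fineK fb) -!EFinB !lee_fin.
by rewrite lerD2l lerN2.
Qed.

Lemma dirac_pre (a : X) (A : set X) :
  \d_(a : borelT X) (T @^-1` A) = \d_(T a : borelT X) A :> \bar R.
Proof.
by rewrite !diracE.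
Qed.

Lemma inv_e : inv e = e.
Proof.
have h1 := msupp_dirac hsdf (hg_unit_l H (inv e)).
have := (hg_supp_e H e (inv e)).2 (esym (hg_inv_invol H e)).
by move/(h1 e).1.
Qed.

Lemma T_e : T e = e.
Proof.
have h : forall A : set (borelT X), measurable A ->
    conv (T e) (inv (T e)) A = \d_(T (inv e) : borelT X) A.
  move=> A mA; rewrite -hom_eq_T // (hg_unit_l H) //; last exact: (preT_mbl cT mA).
have := (hg_supp_e H (T e) (inv (T e))).2 (esym (hg_inv_invol H (T e))).
move/(msupp_dirac hsdf h e).1 => h2; rewrite inv_e in h2.
by rewrite -h2.
Qed.

Lemma T_inv y : T (inv y) = inv (T y).
Proof.
apply: (dirac_inj (R := R) hsdf) => A mA.
rewrite -dirac_pre -(hg_unit_l H) //; last exact: (preT_mbl cT mA).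
by rewrite hom_eq_T // T_e (hg_unit_l H).
Qed.

Lemma sub_T : closed (range T) -> subhypergroup conv inv (range T).
Proof.
move=> cR; split => //.
  by move=> _ [a _ <-]; exists (inv a) => //; exact: T_inv.
move=> _ _ [a _ <-] [b _ <-] z hz; apply/not_notP => nz.
have oU : open (~` range T) by exact: closed_openC.
have := hz _ oU nz.
have -> : T b = inv (T (inv b)) by rewrite T_inv (hg_inv_invol H).
rewrite -hom_eq_T //; last exact: open_mbl.
have -> : T @^-1` (~` range T) = set0.
  by apply/seteqP; split => // w /=; apply; exists w.
by rewrite measure0 ltxx.
Qed.

End Fin.

Unset Implicit Arguments.
Theorem mainTheorem7 (R : realType) (X : ptopologicalType)
  (conv : X -> X -> probability (borelT X) R) (e : X) (inv : X -> X)
  (Tk : nat -> X -> X) (T : X -> X) :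
  commutative_hypergroup conv e inv ->
  (forall k, hg_automorphism conv inv (Tk k)) ->
  (forall x, Tk k x @[k --> \oo] --> T x) ->
  continuous T ->
  closed (range T) ->
  subhypergroup conv inv (range T) /\ hg_hom_eq conv inv T.
Proof.
move=> [H _] hA hc cT cR.
have hTk : forall k, hg_homomorphism conv inv (Tk k).
  by move=> k; have [S [_ _ h _]] := hA k.
split; [exact: (sub_T H hTk hc cT cR) | exact: (hom_eq_T H hTk hc cT)].
Qed.
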